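(* Let $n$ be even, $k\ge2$, and let $f:\mathbb{V}_n\to\mathbb{Z}_{2^k}$ be given as $f(x)=a_0(x)+2a_1(x)+\cdots+2^{k-1}a_{k-1}(x)$ with Boolean functions $a_j$. Then $f$ is gbent if and only if $\mathcal{A}=a_{k-1}\oplus\langle a_0,a_1,\ldots,a_{k-2}\rangle$ is an affine space consisting of bent functions such that for any $h_0,h_1,h_2,h_3\in\mathcal{A}$ with $h_0\oplus h_1\oplus h_2\oplus h_3=0$ we have $h_0^*\oplus h_1^*\oplus h_2^*\oplus h_3^*=0$.
   Context: $\mathbb{V}_n$ is an $n$-dimensional $\mathbb{F}_2$-vector space with inner product $u\cdot x$. For a Boolean $g$, $\mathcal{W}_g(u)=\sum_x(-1)^{g(x)\oplus u\cdot x}$; $g$ is bent if $|\mathcal{W}_g(u)|=2^{n/2}$ for all $u$, and then its dual $g^*$ is the Boolean function with $\mathcal{W}_g(u)=2^{n/2}(-1)^{g^*(u)}$. $\langle a_0,\ldots,a_{k-2}\rangle$ is the $\mathbb{F}_2$-span of these functions and $a_{k-1}\oplus L=\{a_{k-1}\oplus h: h\in L\}$. For $f:\mathbb{V}_n\to\mathbb{Z}_{2^k}$, $\mathcal{H}_f(u)=\sum_x\zeta_{2^k}^{f(x)}(-1)^{u\cdot x}$ with $\zeta_{2^k}=e^{2\pi i/2^k}$; $f$ is gbent if $|\mathcal{H}_f(u)|=2^{n/2}$ for all $u$. *)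

(* Defs.v *)
From HB Require Import structures.
From mathcomp Require Import all_boot all_order all_algebra all_field.
Set Implicit Arguments. Unset Strict Implicit. Unset Printing Implicit Defensive.
Import Order.TTheory GRing.Theory Num.Theory.
Local Open Scope ring_scope.

Definition V (n : nat) := {ffun 'I_n -> bool}.

Definition dot (n : nat) (u x : V n) : bool :=
  \big[addb/false]_(i < n) (u i && x i).

Definition walsh (n : nat) (g : V n -> bool) (u : V n) : int :=
  \sum_(x : V n) (-1) ^+ (g x (+) dot u x).

Definition bent (n : nat) (g : V n -> bool) : Prop :=
  forall u : V n, `|walsh g u| = (2 ^ n./2)%:Z.

(* dual g^* : W_g(u) = 2^(n/2) (-1)^(g^*(u)); for bent g this means
   g^*(u) = true iff W_g(u) < 0 *)
Definition dual (n : nat) (g : V n -> bool) (u : V n) : bool :=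
  walsh g u < 0.

(* zeta_{2^k} = e^{2 pi i / 2^k} in algC: the (2^(k-1))-th root of -1 with
   minimal non-negative argument, i.e. e^{i pi / 2^(k-1)} *)
Definition zeta (k : nat) : algC := (2 ^ k.-1)%N.-root (-1).

Definition gwalsh (n k : nat) (f : V n -> 'Z_(2 ^ k)) (u : V n) : algC :=
  \sum_(x : V n) zeta k ^+ (f x : nat) * (-1) ^+ (dot u x).

Definition gbent (n k : nat) (f : V n -> 'Z_(2 ^ k)) : Prop :=
  forall u : V n, `|gwalsh f u| = (2 ^ n./2)%:R.

Definition inA (n k : nat) (a : nat -> V n -> bool) (h : V n -> bool) : Prop :=
  exists c : nat -> bool, forall x : V n,
    h x = a k.-1 x (+) \big[addb/false]_(j < k.-1) (c j && a j x).

(* Main.v *)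
Require Import Defs.
From HB Require Import structures.
From mathcomp Require Import all_boot all_order all_algebra all_field.
From mathcomp Require Import ring zify.
Import Order.TTheory GRing.Theory Num.Theory.
Local Open Scope ring_scope.
Set Implicit Arguments. Unset Strict Implicit. Unset Printing Implicit Defensive.

Lemma zM m : zeta m.+1 ^+ (2 ^ m) = -1.
Proof. by rewrite /zeta /= rootCK // expn_gt0. Qed.

Lemma z2M m : zeta m.+1 ^+ (2 ^ m.+1) = 1.
Proof. by rewrite expnS mulnC exprM zM -signr_odd /=. Qed.

Lemma znorm m : `|zeta m.+1| = 1.
Proof.
apply/eqP; rewrite -(pexpr_eq1 (n := 2 ^ m)) ?expn_gt0 //.
by rewrite -normrX zM normrN1.
Qed.

Lemma zneq0 m : zeta m.+1 != 0.
Proof. by rewrite -normr_eq0 znorm oner_eq0. Qed.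

Lemma zconj m : (zeta m.+1)^* = zeta m.+1 ^+ (2 ^ m.+1).-1.
Proof.
have h1 : zeta m.+1 * (zeta m.+1)^* = 1 by rewrite -normCK znorm expr1n.
have h2 : zeta m.+1 * zeta m.+1 ^+ (2 ^ m.+1).-1 = 1.
  by rewrite -exprS prednK ?expn_gt0 // z2M.
by apply: (mulfI (zneq0 m)); rewrite h1 h2.
Qed.

Lemma zprim m : (2 ^ m.+1).-primitive_root (zeta m.+1).
Proof.
have [d pd dd] := prim_order_exists (expn_gt0 2 m.+1) (z2M m).
have /(dvdn_pfactor _ _ (isT : prime 2)) [e le pe] := dd.
move: le; rewrite leq_eqVlt ltnS => /orP[/eqP Ee | lem].
  by have -> : (2 ^ m.+1)%N = d by rewrite pe Ee.
exfalso.
have : zeta m.+1 ^+ (2 ^ m) = 1.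
  have := prim_order_dvd pd (2 ^ m); rewrite pe.
  move: (dvdn_exp2l 2 lem) => -> /esym /eqP; by [].
rewrite zM => h; have : (2%:R : algC) == 0 by rewrite -[2%N]/(1+1)%N natrD -{1}h addNr.
by rewrite pnatr_eq0.
Qed.


Definition ev m (P : {poly int}) : algC := (map_poly intr P).[zeta m.+1].

Lemma evD m P Q : ev m (P + Q) = ev m P + ev m Q.
Proof. by rewrite /ev rmorphD hornerD. Qed.
Lemma evB m P Q : ev m (P - Q) = ev m P - ev m Q.
Proof. by rewrite /ev rmorphB hornerD hornerN. Qed.
Lemma evN m P : ev m (- P) = - ev m P.
Proof. by rewrite /ev rmorphN hornerN. Qed.
Lemma evXp m P i : ev m (P ^+ i) = ev m P ^+ i.
Proof. by rewrite /ev rmorphXn horner_exp. Qed.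
Lemma evM m P Q : ev m (P * Q) = ev m P * ev m Q.
Proof. by rewrite /ev rmorphM hornerM. Qed.
Lemma evC m c : ev m c%:P = c%:~R.
Proof. by rewrite /ev map_polyC hornerC. Qed.
Lemma evX m : ev m 'X = zeta m.+1.
Proof. by rewrite /ev map_polyX hornerX. Qed.
Lemma evXn m i : ev m 'X^i = zeta m.+1 ^+ i.
Proof. by rewrite /ev map_polyXn hornerXn. Qed.
Lemma ev1 m : ev m 1 = 1.
Proof. by rewrite -polyC1 evC. Qed.
Lemma evX1 m : ev m ('X^(2^m) + 1) = 0.
Proof. by rewrite evD evXn ev1 zM addNr. Qed.
Lemma evZ m c P : ev m (c%:P * P) = c%:~R * ev m P.
Proof. by rewrite evM evC. Qed.
Lemma ev_sum m (I : finType) (F : I -> {poly int}) :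
  ev m (\sum_i F i) = \sum_i ev m (F i).
Proof. by rewrite /ev rmorph_sum horner_sum. Qed.
Lemma evX_pow m i P : ev m (P * 'X^i) = ev m P * zeta m.+1 ^+ i.
Proof. by rewrite evM evXn. Qed.

Lemma linind m (P : {poly int}) : (size P <= 2 ^ m)%N -> ev m P = 0 -> P = 0.
Proof.
move=> sP eP.
set Q := map_poly (intr : int -> rat) P.
have sQ : size Q = size P by rewrite size_map_inj_poly //; apply: intr_inj.
have [p [Dp monp] dvd] := minCpolyP (zeta m.+1).
have rt : root (map_poly ratr Q) (zeta m.+1).
  rewrite /root -map_poly_comp.
  rewrite (eq_map_poly (g := intr)) //; last by move=> x /=; rewrite ratr_int.
  by move: eP; rewrite /ev => ->.
have spQ : (p %| Q)%R by rewrite -dvd.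
have sp : size p = (2 ^ m).+1.
  have <- : size (minCpoly (zeta m.+1)) = size p by rewrite Dp size_map_poly.
  rewrite (minCpoly_cyclotomic (zprim m)) size_cyclotomic.
  by rewrite totient_pfactor // mul1n.
have : Q == 0.
  apply/negPn/negP => Qn0.
  have := dvdp_leq Qn0 spQ; rewrite sp sQ.
  by rewrite ltnNge sP.
rewrite -size_poly_eq0 sQ size_poly_eq0 => /eqP; done.
Qed.

Lemma red m (P : {poly int}) :
  exists Q R, P = Q * ('X^(2^m) + 1) + R /\ (size R <= 2 ^ m)%N.
Proof.
have mon : ('X^(2^m) + 1 : {poly int}) \is monic.
  by rewrite monicE lead_coefDl ?lead_coefXn // size_polyXn size_poly1 ltnS expn_gt0.
exists (P %/ ('X^(2^m) + 1)), (P %% ('X^(2^m) + 1)); split.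
  exact: Pdiv.IdomainMonic.divp_eq.
have := ltn_modpN0 P (monic_neq0 mon).
by rewrite size_addl ?size_polyXn ?size_poly1 ?ltnS ?expn_gt0.
Qed.

Lemma ev_red m P Q R : P = Q * ('X^(2^m) + 1) + R -> ev m P = ev m R.
Proof. by move=> ->; rewrite evD evM evX1 mulr0 add0r. Qed.

Lemma wd m P Q : ev m P = ev m Q -> (2 %| P.[1] - Q.[1])%Z.
Proof.
move=> e.
have [Q' [R [eR sR]]] := red m (P - Q).
have eR0 : ev m R = 0 by rewrite -(ev_red eR) evB e subrr.
have R0 := linind sR eR0.
rewrite -hornerN -hornerD eR R0 addr0 hornerM hornerD hornerXn expr1n.
by rewrite hornerC dvdz_mull.
Qed.

Definition D m (x : algC) := exists P, x = ev m P.

Lemma conj_ev m P : exists P', (ev m P)^* = ev m P' /\ P'.[1] = P.[1].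
Proof.
elim/poly_ind: P => [|P c [P' [e1 e2]]].
  by exists 0; rewrite /ev map_poly0 horner0 rmorph0.
exists (P' * 'X^((2^m.+1).-1) + c%:P); split.
  rewrite !evD !evM evC evX evXn rmorphD rmorphM /= e1 zconj; congr (_ + _).
  by rewrite rmorph_int.
by rewrite !hornerD !hornerM hornerXn hornerX !hornerC e2 expr1n mulr1.
Qed.


Lemma zN m : zeta m.+1 * zeta m.+1 ^+ (2^m.+1).-1 = 1.
Proof. by rewrite -exprS prednK ?expn_gt0 // z2M. Qed.

Lemma two_neq0 : (2%:R : algC) != 0.
Proof. by rewrite pnatr_eq0. Qed.

Lemma pi_neq0 m : 1 - zeta m.+1 != 0.
Proof.
rewrite subr_eq0; apply/negP => /eqP e.
have := zM m; rewrite -e expr1n => h.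
have : (2%:R : algC) == 0 by rewrite -[2%N]/(1+1)%N natrD {1}h addNr.
by rewrite pnatr_eq0.
Qed.

Lemma two_geo m : (2%:R : algC) = (1 - zeta m.+1) * \sum_(i < 2^m) zeta m.+1 ^+ i.
Proof.
have := subrX1 (zeta m.+1) (2^m); rewrite zM => h.
rewrite -[(1 - _)]opprB mulNr -h; rewrite -[2%N]/(1+1)%N natrD; ring.
Qed.

Lemma pi_div m P : (2 %| P.[1])%Z -> exists Q, ev m P = (1 - zeta m.+1) * ev m Q.
Proof.
case/dvdzP => t et.
have : root (P - (P.[1])%:P) 1 by rewrite /root hornerD hornerN hornerC subrr.
case/factor_theorem => Q0 eQ0.
exists (- Q0 + t%:P * \sum_(i < 2^m) 'X^i).
have eP : P = Q0 * ('X - 1%:P) + (P.[1])%:P by rewrite -eQ0 subrK.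
rewrite eP evD evM evB evX evC et evC evD evN evM evC ev_sum.
under eq_bigr do rewrite evXn.
have h2 : ((2 : int)%:~R : algC) = (1 - zeta m.+1) * \sum_(i < 2^m) zeta m.+1 ^+ i.
  by rewrite -two_geo.
rewrite intrM h2 -[1%:~R]/(1 : algC); ring.
Qed.

Lemma dvd2sq (x : int) : (2 %| x * x)%Z -> (2 %| x)%Z.
Proof. by rewrite !dvdzE abszM Euclid_dvdM // orbb. Qed.

Lemma pi_conj m : (1 - zeta m.+1)^* = - zeta m.+1 ^+ (2^m.+1).-1 * (1 - zeta m.+1).
Proof.
rewrite rmorphB rmorph1 /= zconj.
have := zN m; rewrite mulrC => h.
by rewrite mulrBr mulr1 mulNr h opprK addrC.
Qed.

Lemma desc m j : forall z, D m z ->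
  (exists w, D m w /\ z * z^* = (1 - zeta m.+1) ^+ (2 * j) * w) ->
  exists y, D m y /\ z = (1 - zeta m.+1) ^+ j * y.
Proof.
elim: j => [|j IH] z [P eP] [w [[W eW] ezw]].
  by exists z; split; [exists P | rewrite expr0 mul1r].
have [P' [eP' eP'1]] := conj_ev m P.
have e1 : ev m (P * P') = ev m ((1 - 'X) ^+ (2 * j.+1) * W).
  rewrite evM -eP' -eP ezw evM evXp evB ev1 evX eW; done.
have := wd e1; rewrite !hornerE eP'1.
rewrite subrr expr0n /= mul0r subr0 => /dvd2sq /(pi_div m) [Q eQ].
set y := ev m Q.
have hz : z = (1 - zeta m.+1) * y by rewrite eP eQ.
have e2 : y * y^* = (1 - zeta m.+1) ^+ (2 * j) * (- zeta m.+1 * w).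
  apply: (mulfI (mulf_neq0 (pi_neq0 m) (pi_neq0 m))).
  move: ezw; rewrite hz rmorphM /= pi_conj => ezw.
  have e3 : (1 - zeta m.+1) * (1 - zeta m.+1) * ((- zeta m.+1 ^+ (2 ^ m.+1).-1) * (y * y^*)) =
      (1 - zeta m.+1) ^+ (2 * j.+1) * w.
    by rewrite -ezw; ring.
  have zz := zN m.
  have e4 : (1 - zeta m.+1) ^+ (2 * j.+1) =
      (1 - zeta m.+1) ^+ (2 * j) * (1 - zeta m.+1) * (1 - zeta m.+1).
    by rewrite mulnS exprD; ring.
  transitivity (- zeta m.+1 * ((1 - zeta m.+1) * (1 - zeta m.+1) *
      ((- zeta m.+1 ^+ (2 ^ m.+1).-1) * (y * y^*)))).
    by rewrite -[in LHS](mul1r (y * y^*)) -zz; ring.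
  by rewrite e3 e4; ring.
have [y' [Dy' ey']] : exists y', D m y' /\ y = (1 - zeta m.+1) ^+ j * y'.
  apply: IH; first by exists Q.
  exists (- zeta m.+1 * w); split => //.
  by exists (- 'X * W); rewrite evM evN evX eW.
exists y'; split => //.
by rewrite hz ey' exprS mulrA.
Qed.

Lemma D_ev m P : D m (ev m P). Proof. by exists P. Qed.
Lemma D_add m x y : D m x -> D m y -> D m (x + y).
Proof. by move=> [P ->] [Q ->]; exists (P + Q); rewrite evD. Qed.
Lemma D_mul m x y : D m x -> D m y -> D m (x * y).
Proof. by move=> [P ->] [Q ->]; exists (P * Q); rewrite evM. Qed.
Lemma D_opp m x : D m x -> D m (- x).
Proof. by move=> [P ->]; exists (- P); rewrite evN. Qed.
Lemma D_int m (c : int) : D m c%:~R.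
Proof. by exists c%:P; rewrite evC. Qed.
Lemma D_1 m : D m 1.
Proof. by exists 1; rewrite ev1. Qed.
Lemma D_z m : D m (zeta m.+1).
Proof. by exists 'X; rewrite evX. Qed.
Lemma D_exp m x i : D m x -> D m (x ^+ i).
Proof. by move=> [P ->]; exists (P ^+ i); rewrite evXp. Qed.
Lemma D_sum m (I : finType) (F : I -> algC) : (forall i, D m (F i)) -> D m (\sum_i F i).
Proof.
move=> h; elim/big_rec: _ => [|i x _ Dx]; first by rewrite -[0]/(0%:~R); apply: D_int.
exact: D_add.
Qed.

Lemma piM m : (0 < m)%N -> exists b, D m b /\ (1 - zeta m.+1) ^+ (2 ^ m) = 2%:R * b.
Proof.
move=> m0.
have cl : forall j, (j < m)%N -> exists g, D m g /\
   (1 - zeta m.+1) ^+ (2 ^ j.+1) = 1 + zeta m.+1 ^+ (2 ^ j.+1) + 2%:R * g.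
  elim => [|j IH] lt.
    exists (- zeta m.+1); split; first by apply/D_opp/D_z.
    rewrite expn1 -[2%:R]/(1 + 1 : algC); ring.
  have [g [Dg eg]] := IH (ltnW lt).
  set w := zeta m.+1 ^+ (2 ^ j.+1) in eg.
  exists (w + 2%:R * g + 2%:R * g * w + 2%:R * g ^+ 2); split.
    apply: D_add; last by apply: D_mul; [apply: (D_int m 2) | apply: D_exp].
    apply: D_add; last by repeat apply: D_mul => //; [apply: (D_int m 2) | apply: D_exp; apply: D_z].
    apply: D_add; first by apply: D_exp; apply: D_z.
    by apply: D_mul => //; apply: (D_int m 2).
  rewrite expnS mulnC exprM eg.
  have -> : zeta m.+1 ^+ (2 ^ j.+1 * 2) = w ^+ 2 by rewrite exprM.
  rewrite -[2%:R]/(1 + 1 : algC); ring.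
case: m m0 cl => [//|m] _ cl.
have [g [Dg eg]] := cl m (ltnSn m).
exists g; split => //.
by rewrite eg zM addrN add0r.
Qed.

Lemma two_div m : exists a, D m a /\ 2%:R = (1 - zeta m.+1) ^+ (2 ^ m) * a.
Proof.
have cl : forall j, (j <= m)%N -> exists a, D m a /\
   1 - zeta m.+1 ^+ (2 ^ j) = (1 - zeta m.+1) ^+ (2 ^ j) * a.
  elim => [|j IH] le.
    by exists 1; split; [apply: D_1 | rewrite mulr1].
  have [a [Da ea]] := IH (ltnW le).
  set s := (2 ^ j)%N in ea.
  set t := (1 + 2 ^ (m - j))%N.
  set e := \sum_(i < t) (zeta m.+1 ^+ s) ^+ i.
  have De : D m e by apply: D_sum => i; apply/D_exp/D_exp/D_z.
  have h1 : 1 + zeta m.+1 ^+ s = (1 - zeta m.+1 ^+ s) * e.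
    have := subrX1 (zeta m.+1 ^+ s) t.
    rewrite -exprM mulnDr muln1 -expnD subnKC ?(ltnW le) // exprD zM => h.
    rewrite -[1 - _]opprB mulNr -h; ring.
  exists (a ^+ 2 * e); split; first by apply: D_mul => //; apply: D_exp.
  have -> : (2 ^ j.+1)%N = (s * 2)%N by rewrite expnS mulnC.
  rewrite !exprM.
  transitivity ((1 - zeta m.+1 ^+ s) * (1 + zeta m.+1 ^+ s)); first by ring.
  by rewrite h1 ea; ring.
have [a [Da ea]] := cl m (leqnn m).
exists a; split => //.
by rewrite -ea zM opprK.
Qed.


Lemma NT m r z : (0 < m)%N -> D m z -> z * z^* = 2%:R ^+ (2 * r) ->
  exists y, D m y /\ z = 2%:R ^+ r * y.
Proof.
move=> m0 Dz ez.
have [a [Da ea]] := two_div m.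
have [b [Db eb]] := piM m0.
have [y0 [Dy0 ey0]] : exists y0, D m y0 /\ z = (1 - zeta m.+1) ^+ (2 ^ m * r) * y0.
  apply: desc => //.
  exists (a ^+ (2 * r)); split; first by apply: D_exp.
  by rewrite ez ea exprMn -!exprM mulnCA.
exists (b ^+ r * y0); split; first by apply: D_mul => //; apply: D_exp.
by rewrite ey0 exprM eb exprMn mulrA.
Qed.

Lemma ev_coef m (P : {poly int}) : (size P <= 2 ^ m)%N ->
  ev m P = \sum_(i < 2 ^ m) (P`_i)%:~R * zeta m.+1 ^+ i.
Proof.
move=> sP; rewrite /ev (horner_coef_wide _ (n := 2 ^ m)).
  by apply: eq_bigr => i _; rewrite coef_map.
by rewrite size_map_inj_poly //; apply: intr_inj.
Qed.

Lemma unit_coef m (P : {poly int}) : (size P <= 2 ^ m)%N ->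
  ev m P * (ev m P)^* = 1 -> \sum_(i < 2 ^ m) P`_i ^+ 2 = 1.
Proof.
move=> sP eu.
set M := (2 ^ m)%N.
have M0 : (0 < M)%N by rewrite expn_gt0.
set Pr := \poly_(i < M) P`_(M.-1 - i).
have sPr : (size Pr <= M)%N by apply: size_poly.
have ePr : ev m Pr = zeta m.+1 ^+ M.-1 * (ev m P)^*.
  rewrite (ev_coef sPr) (ev_coef sP) rmorph_sum mulr_sumr /=.
  rewrite (reindex_inj rev_ord_inj) /=.
  apply: eq_bigr => i _.
  have iM := ltn_ord i.
  rewrite coef_poly /= ifT; last by lia.
  have -> : (M.-1 - (M - i.+1))%N = i by lia.
  rewrite rmorphM rmorphXn /= rmorph_int zconj -exprM mulrCA -exprD.
  congr (_ * _).
  have e : (M.-1 + (2 ^ m.+1).-1 * i = (2 ^ m - i.+1) + (2 ^ m.+1) * i)%N.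
    rewrite /M expnS; move: iM (expn_gt0 2 m); nia.
  by rewrite e exprD exprM z2M expr1n mulr1.
set T := P * Pr.
have eT : ev m (T - 'X^(M.-1)) = 0.
  by rewrite evB evM ePr evXn mulrCA eu mulr1 subrr.
have [Q [R [eQR sR]]] := red m (T - 'X^(M.-1)).
have R0 : R = 0 by apply: linind sR _; rewrite -(ev_red eQR) eT.
have sT : (size (T - 'X^(M.-1))%R <= (M + M).-1)%N.
  apply: leq_trans (size_add _ _) _; rewrite size_opp size_polyXn geq_max.
  apply/andP; split; last by lia.
  apply: leq_trans (size_mul_leq _ _) _; move: sP sPr; rewrite -/M; lia.
have mon : ('X^M + 1 : {poly int}) \is monic.
  by rewrite monicE lead_coefDl ?lead_coefXn // size_polyXn size_poly1 ltnS.
have sQ : (size Q <= M.-1)%N.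
  case: (eqVneq Q 0) => [->|Qn0]; first by rewrite size_poly0.
  move: sT; rewrite eQR R0 addr0 size_Mmonic // size_addl ?size_polyXn ?size_poly1 //.
  lia.
have cQ : Q`_M.-1 = 0 by apply: nth_default.
have := congr1 (fun p : {poly int} => p`_M.-1) eQR.
rewrite R0 addr0 /= mulrDr mulr1 !coefD coefN coefXn eqxx coefMXn ifT; last by lia.
rewrite cQ addr0 /T coefM prednK // => h.
have <- : \sum_(j < M) P`_j * Pr`_(M.-1 - j) = 1.
  by apply/eqP; rewrite -subr_eq0; apply/eqP; exact h.
apply: eq_bigr => j _; rewrite coef_poly ifT; last by lia.
have -> : (M.-1 - (M.-1 - j))%N = j by have := ltn_ord j; lia.
by rewrite expr2.
Qed.


Lemma sq1 M (p : 'I_M -> int) : \sum_i p i ^+ 2 = 1 ->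
  exists d, (p d = 1 \/ p d = -1) /\ forall i, i != d -> p i = 0.
Proof.
move=> e.
have [d pd] : exists d, p d != 0.
  case: (pickP (fun i => p i != 0)) => [d pd | h]; first by exists d.
  move: e; rewrite big1 // => i _; have := h i; move/negbFE/eqP ->.
  by rewrite expr0n.
move: e; rewrite (bigD1 d) //= => e.
have ge0 : 0 <= \sum_(i | i != d) p i ^+ 2 by apply: sumr_ge0 => i _; apply: sqr_ge0.
have ge1 : 1 <= p d ^+ 2.
  move: pd; rewrite expr2; move: (p d) => x; nia.
have e1 : p d ^+ 2 = 1 by apply/eqP; rewrite eq_le ge1 -e lerDl ge0.
have e0 : \sum_(i | i != d) p i ^+ 2 = 0.
  by move: e; rewrite e1 => /(congr1 (fun x => x - 1)); rewrite addrC addrK subrr.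
exists d; split.
  by move: e1 => /eqP; rewrite sqrf_eq1 => /orP [] /eqP; [left|right].
move=> i id; move/eqP: e0; rewrite psumr_eq0; last by move=> j _; apply: sqr_ge0.
by move/allP => /(_ i); rewrite mem_index_enum id sqrf_eq0 => /(_ isT) /implyP /(_ isT) /eqP.
Qed.

Lemma BL m (b : nat -> bool) : (\sum_(j < m) 2 ^ j * b j < 2 ^ m)%N.
Proof.
elim: m => [|m IH]; first by rewrite big_ord0.
rewrite big_ord_recr /= expnS mul2n -addnn; case: (b m) => /=.
  by rewrite muln1 ltn_add2r.
by rewrite muln0 addn0 ltn_addr.
Qed.

Lemma BS m (b : nat -> bool) j : (j < m)%N ->
  odd ((\sum_(j' < m) 2 ^ j' * b j') %/ 2 ^ j) = b j.
Proof.
elim: m => [//|m IH] lt.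
rewrite big_ord_recr /=.
move: lt; rewrite ltnS leq_eqVlt => /orP [/eqP -> | lt].
  rewrite mulnC divnDMl ?expn_gt0 // divn_small ?BL //.
  by case: (b m).
have -> : (2 ^ m * b m = (2 ^ (m - j) * b m) * 2 ^ j)%N.
  by rewrite mulnAC -expnD subnK // ltnW.
rewrite divnDMl ?expn_gt0 // oddD IH // oddM oddX.
have -> : (m - j == 0)%N = false by apply/negbTE; rewrite -lt0n subn_gt0.
by rewrite /= addbF.
Qed.

Lemma SB m i : (i < 2 ^ m)%N -> i = (\sum_(j < m) 2 ^ j * odd (i %/ 2 ^ j))%N.
Proof.
elim: m i => [|m IH] i lt.
  by rewrite big_ord0; move: lt; rewrite expn0; lia.
rewrite big_ord_recl /= expn0 mul1n divn1.
have lt2 : (i %/ 2 < 2 ^ m)%N by rewrite ltn_divLR // -expnSr.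
under eq_bigr do rewrite /bump /= add1n expnS divnMA -mulnA.
rewrite -big_distrr /= -(IH _ lt2).
by rewrite divn2 mul2n odd_double_half.
Qed.


Definition kap n m (a : nat -> V n -> bool) (x : V n) : nat :=
  (\sum_(j < m) 2 ^ j * a j x)%N.

Lemma kap_lt n m a x : (@kap n m a x < 2 ^ m)%N.
Proof. exact: (BL m (fun j => a j x)). Qed.

Definition Sfun n m (a : nat -> V n -> bool) (u : V n) (i : nat) : int :=
  \sum_(x : V n | kap m a x == i) (-1) ^+ (a m x (+) dot u x).

Definition gam m (c : nat -> bool) (i : nat) : bool :=
  \big[addb/false]_(j < m) (c j && odd (i %/ 2 ^ j)).

Definition hc n m (a : nat -> V n -> bool) (c : nat -> bool) (x : V n) : bool :=
  a m x (+) \big[addb/false]_(j < m) (c j && a j x).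

Lemma gam_kap n m (a : nat -> V n -> bool) (c : nat -> bool) x :
  \big[addb/false]_(j < m) (c j && a j x) = gam m c (@kap n m a x).
Proof.
by apply: eq_bigr => j _; rewrite /kap (BS (fun j => a j x)).
Qed.

Lemma part n m (a : nat -> V n -> bool) (R : nmodType) (F : V n -> R) :
  \sum_x F x = \sum_(i < 2 ^ m) \sum_(x | @kap n m a x == i) F x.
Proof.
by rewrite (partition_big (fun x => Ordinal (kap_lt m a x)) xpredT) //=.
Qed.

Lemma W_expand n m (a : nat -> V n -> bool) (c : nat -> bool) u :
  walsh (@hc n m a c) u = \sum_(i < 2 ^ m) (-1) ^+ (gam m c i) * Sfun m a u i.
Proof.
rewrite /walsh (part m a); apply: eq_bigr => i _.
rewrite /Sfun mulr_sumr; apply: eq_big => // x /eqP kx.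
by rewrite /hc gam_kap kx -signr_addb addbA (addbC (a m x)).
Qed.

Definition xorv m (C C' : V m) : V m := [ffun j => C j (+) C' j].

Lemma xorv_inj m C0 : injective (fun C => @xorv m C C0).
Proof.
move=> C1 C2 /= /ffunP e; apply/ffunP => j; move: (e j); rewrite !ffunE.
by case: (C1 j); case: (C2 j); case: (C0 j).
Qed.

Lemma char_sum m (chi : V m -> bool) :
  (forall C C', chi (xorv C C') = chi C (+) chi C') ->
  forall C0, chi C0 -> \sum_C (-1) ^+ (chi C) = 0 :> int.
Proof.
move=> add C0 h0.
set S := \sum_C _.
have : S = - S.
  rewrite {1}/S (reindex_inj (@xorv_inj m C0)) /= /S -sumrN.
  by apply: eq_bigr => C _; rewrite add h0 addbT signrN.
move/eqP; rewrite -subr_eq0 opprK -mulr2n -mulr_natr mulf_eq0 => /orP [/eqP //|].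
by [].
Qed.

Lemma card_V m : #|V m| = (2 ^ m)%N.
Proof. by rewrite card_ffun card_bool card_ord. Qed.

Definition cn m (C : V m) (j : nat) : bool := [exists i : 'I_m, (val i == j) && C i].

Lemma cn_ord m (C : V m) (j : 'I_m) : cn C j = C j.
Proof.
apply/existsP/idP => [[i /andP [/eqP /val_inj -> //]] | h].
by exists j; rewrite eqxx h.
Qed.

Lemma gam_xor m (C C' : V m) i : gam m (cn (xorv C C')) i = gam m (cn C) i (+) gam m (cn C') i.
Proof.
rewrite /gam -big_split /=; apply: eq_bigr => j _.
by rewrite !cn_ord ffunE; case: (C j); case: (C' j); case: (odd _).
Qed.

Lemma gam0 m i : gam m (cn ([ffun _ => false] : V m)) i = false.
Proof. by rewrite /gam big1 // => j _; rewrite cn_ord ffunE. Qed.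

Lemma gam_delta m (j : 'I_m) i : gam m (cn ([ffun j' => j' == j] : V m)) i = odd (i %/ 2 ^ j).
Proof.
rewrite /gam (bigD1 j) //= big1 ?addbF; first by rewrite cn_ord ffunE eqxx.
by move=> j' /negbTE hj; rewrite cn_ord ffunE hj.
Qed.

Lemma orth m (i i' : 'I_(2 ^ m)) : i != i' ->
  exists C0 : V m, gam m (cn C0) i (+) gam m (cn C0) i'.
Proof.
move=> ne.
case: (pickP (fun j : 'I_m => odd (i %/ 2 ^ j) != odd (i' %/ 2 ^ j))) => [j hj | h].
  by exists [ffun j' => j' == j]; rewrite !gam_delta; move: hj; case: (odd _); case: (odd _).
exfalso; move/negP: ne; apply; apply/eqP/val_inj => /=.
rewrite (SB (ltn_ord i)) (SB (ltn_ord i')); apply: eq_bigr => j _.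
by have := h j; move/negbFE/eqP ->.
Qed.


Lemma inversion n m (a : nat -> V n -> bool) u (i : 'I_(2 ^ m)) :
  \sum_(C : V m) (-1) ^+ (gam m (cn C) i) * walsh (hc m a (cn C)) u
  = (2 ^ m)%:R * Sfun m a u i :> int.
Proof.
under eq_bigr do rewrite W_expand mulr_sumr.
rewrite exchange_big /= (bigD1 i) //= [X in _ + X]big1 ?addr0.
  under eq_bigr do rewrite mulrA -signr_addb addbb expr0 mul1r.
  by rewrite sumr_const card_V mulr_natl.
move=> i' ne.
have ne' : i != i' by rewrite eq_sym.
have [C0 hC0] := orth ne'.
under eq_bigr do rewrite mulrA -signr_addb.
rewrite -mulr_suml (@char_sum m (fun C => gam m (cn C) i (+) gam m (cn C) i') _ C0 hC0) ?mul0r //.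
move=> C C' /=; rewrite !gam_xor.
by case: (gam m (cn C) i); case: (gam m (cn C) i'); case: (gam m (cn C') i); case: (gam m (cn C') i').
Qed.

Lemma dir1 n m (a : nat -> V n -> bool) u (r : nat) (G : V m -> bool) :
  (forall C, walsh (hc m a (cn C)) u = (-1) ^+ (G C) * (2 ^ r)%:R) ->
  (forall C C', G (xorv C C') = G C (+) G C' (+) G [ffun _ => false]) ->
  exists i0 : 'I_(2 ^ m), Sfun m a u i0 = (-1) ^+ (G [ffun _ => false]) * (2 ^ r)%:R /\
    forall i, i != i0 -> Sfun m a u i = 0.
Proof.
move=> HW Hadd.
set z0 : V m := [ffun _ => false].
pose chi (i : 'I_(2 ^ m)) C := gam m (cn C) i (+) G C (+) G z0.
have chi_add : forall i C C', chi i (xorv C C') = chi i C (+) chi i C'.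
  move=> i C C'; rewrite /chi gam_xor Hadd -/z0.
  by case: (gam m (cn C) i); case: (gam m (cn C') i); case: (G C); case: (G C'); case: (G z0).
have eqS : forall i : 'I_(2 ^ m), (2 ^ m)%:R * Sfun m a u i =
    (\sum_C (-1) ^+ (chi i C)) * ((-1) ^+ (G z0) * (2 ^ r)%:R) :> int.
  move=> i; rewrite -inversion mulr_suml; apply: eq_bigr => C _.
  rewrite HW mulrA -signr_addb mulrA -signr_addb /chi; congr (_ ^+ _ * _).
  by case: (gam m (cn C) i); case: (G C); case: (G z0).
have M0 : ((2 ^ m)%:R : int) != 0 by rewrite pnatr_eq0 -lt0n expn_gt0.
have claim1 : forall (i : 'I_(2 ^ m)) C0, chi i C0 -> Sfun m a u i = 0.
  move=> i C0 h; apply/eqP; rewrite -(mulrI_eq0 _ (mulfI M0)) eqS.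
  by rewrite (char_sum (chi_add i) h) mul0r.
have claim2 : forall i : 'I_(2 ^ m), (forall C, chi i C = false) ->
    Sfun m a u i = (-1) ^+ (G z0) * (2 ^ r)%:R.
  move=> i h; apply: (mulfI M0); rewrite eqS.
  under eq_bigr do rewrite h expr0.
  by rewrite sumr_const card_V mulr_natl.
have [i0 hi0] : exists i0 : 'I_(2 ^ m), Sfun m a u i0 != 0.
  case: (pickP (fun i : 'I_(2 ^ m) => Sfun m a u i != 0)) => [i hi | h]; first by exists i.
  have := HW z0; rewrite -/z0 W_expand big1.
    move/eqP; rewrite eq_sym mulf_eq0 signr_eq0 pnatr_eq0 expn_eq0 /=.
    by [].
  by move=> i _; have := h i; move/negbFE/eqP ->; rewrite mulr0.
have nochi : forall C, chi i0 C = false.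
  move=> C; apply/negP => h; move: hi0; rewrite (claim1 _ _ h) eqxx; done.
exists i0; split; first exact: claim2.
move=> i ne.
have ne' : i0 != i by rewrite eq_sym.
have [C0 hC0] := orth ne'.
apply: (claim1 i C0); have := nochi C0; move: hC0; rewrite /chi.
by case: (gam m (cn C0) i0); case: (gam m (cn C0) i); case: (G C0); case: (G z0).
Qed.


Lemma H_expand n m (a : nat -> V n -> bool) (f : V n -> 'Z_(2 ^ m.+1)) :
  (forall x, f x = (\sum_(j < m.+1) 2 ^ j * a j x)%N%:R) ->
  forall u, gwalsh f u = \sum_(i < 2 ^ m) (Sfun m a u i)%:~R * zeta m.+1 ^+ i.
Proof.
move=> hf u; rewrite /gwalsh (part m a); apply: eq_bigr => i _.
rewrite /Sfun rmorph_sum mulr_suml; apply: eq_big => // x /eqP kx.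
have h1 : (1 < 2 ^ m.+1)%N by rewrite -{1}(expn0 2) ltn_exp2l.
rewrite hf val_Zp_nat // (expr_mod _ (z2M m)) big_ord_recr /= exprD.
rewrite -/(kap m a x) kx exprM zM intr_sign signr_addb; ring.
Qed.

Lemma dir2 n m (a : nat -> V n -> bool) (f : V n -> 'Z_(2 ^ m.+1)) u r :
  (forall x, f x = (\sum_(j < m.+1) 2 ^ j * a j x)%N%:R) -> (0 < m)%N ->
  `|gwalsh f u| = (2 ^ r)%:R ->
  exists d : 'I_(2 ^ m), exists e : bool, forall i : 'I_(2 ^ m),
    Sfun m a u i = if i == d then (-1) ^+ e * (2 ^ r)%:R else 0.
Proof.
move=> hf m0 hn.
set Sp := \poly_(i < 2 ^ m) Sfun m a u i.
have sSp : (size Sp <= 2 ^ m)%N by apply: size_poly.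
have ez : gwalsh f u = ev m Sp.
  rewrite (H_expand hf) (ev_coef sSp); apply: eq_bigr => i _.
  by rewrite coef_poly ltn_ord.
have zz : ev m Sp * (ev m Sp)^* = 2%:R ^+ (2 * r).
  by rewrite -ez -normCK hn natrX -exprM mulnC.
have [y [[Y eY] ey]] := NT m0 (D_ev m Sp) zz.
have [Q [Y' [eQ sY']]] := red m Y.
have eYY : ev m Y = ev m Y' := ev_red eQ.
set c : int := (2 ^ r)%:R.
have cC : (c%:~R : algC) = 2%:R ^+ r by rewrite /c -natrX; rewrite rmorph_nat.
have eS : Sp = c%:P * Y'.
  apply/eqP; rewrite -subr_eq0; apply/eqP; apply: (linind (m := m)).
    apply: leq_trans (size_add _ _) _; rewrite size_opp geq_max; apply/andP; split => //.
    by rewrite mul_polyC; apply: leq_trans (size_scale_leq _ _) _.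
  by rewrite evB evM evC ey eY eYY cC subrr.
have yy : ev m Y' * (ev m Y')^* = 1.
  have n0 : (2%:R ^+ (2 * r) : algC) != 0 by rewrite expf_neq0 // pnatr_eq0.
  apply: (mulfI n0); rewrite mulr1 -{2}zz ey eY eYY rmorphM rmorphXn /= conjC_nat.
  by rewrite mulnC exprM; ring.
have s1 := unit_coef sY' yy.
have [d [pd p0]] := sq1 (p := fun i : 'I_(2 ^ m) => Y'`_i) s1.
exists d, (Y'`_d == -1); move=> i.
have -> : Sfun m a u i = c * Y'`_i by rewrite -coefCM -eS coef_poly ltn_ord.
case: eqP => [-> | /eqP ne]; last by rewrite (p0 i ne) mulr0.
by case: pd => ->; rewrite ?eqxx /= ?expr1 ?expr0 mulrC //.
Qed.


Lemma walsh_ext n (g h : V n -> bool) : g =1 h -> forall u, walsh g u = walsh h u.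
Proof. by move=> e u; apply: eq_bigr => x _; rewrite e. Qed.

Lemma sign_lt0 (b : bool) r : ((-1) ^+ b * (2 ^ r)%:R < 0 :> int) = b.
Proof.
case: b; rewrite ?expr1 ?expr0 ?mulN1r ?mul1r.
  by rewrite oppr_lt0 ltr0n expn_gt0.
by rewrite ltNge ler0n.
Qed.

Lemma norm_sign (w : int) r : `|w| = (2 ^ r)%:Z -> w = (-1) ^+ (w < 0)%R * (2 ^ r)%:R.
Proof.
move=> h; rewrite natz -h.
case: (ltP w 0) => hw; first by rewrite expr1 mulN1r ltr0_norm ?opprK.
by rewrite expr0 mul1r ger0_norm.
Qed.

Lemma beta_xor m (C C' : V m) (q : nat -> bool) :
  \big[addb/false]_(j < m) (cn (xorv C C') j && q j) =
  \big[addb/false]_(j < m) (cn C j && q j) (+) \big[addb/false]_(j < m) (cn C' j && q j).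
Proof.
rewrite -big_split /=; apply: eq_bigr => j _.
by rewrite !cn_ord ffunE; case: (C j); case: (C' j); case: (q j).
Qed.

Lemma beta0 m (q : nat -> bool) :
  \big[addb/false]_(j < m) (cn ([ffun _ => false] : V m) j && q j) = false.
Proof. by rewrite big1 // => j _; rewrite cn_ord ffunE. Qed.

Lemma Wd n m (a : nat -> V n -> bool) u r (d : 'I_(2 ^ m)) (e : bool) (c : nat -> bool) :
  (forall i : 'I_(2 ^ m), Sfun m a u i = if i == d then (-1) ^+ e * (2 ^ r)%:R else 0) ->
  walsh (hc m a c) u = (-1) ^+ (gam m c d (+) e) * (2 ^ r)%:R.
Proof.
move=> hS; rewrite W_expand (bigD1 d) //= big1 ?addr0.
  by rewrite hS eqxx mulrA -signr_addb.
by move=> i /negbTE ne; rewrite hS ne mulr0.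
Qed.

Lemma x0ex n m (a : nat -> V n -> bool) u (d : nat) : Sfun m a u d != 0 ->
  exists x0, kap m a x0 = d.
Proof.
case: (pickP (fun x => kap m a x == d)) => [x /eqP hx | h]; first by exists x.
by rewrite /Sfun big_pred0 ?eqxx.
Qed.

Unset Implicit Arguments.
Theorem corollary1 (n k : nat) (a : nat -> V n -> bool) (f : V n -> 'Z_(2 ^ k)) :
  ~~ odd n -> (2 <= k)%N ->
  (forall x : V n, f x = (\sum_(j < k) 2 ^ j * a j x)%N%:R) ->
  gbent f <->
  ((forall h, inA k a h -> bent h) /\
   (forall h0 h1 h2 h3 : V n -> bool,
      inA k a h0 -> inA k a h1 -> inA k a h2 -> inA k a h3 ->
      (forall x, h0 x (+) h1 x (+) h2 x (+) h3 x = false) ->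
      forall u, dual h0 u (+) dual h1 u (+) dual h2 u (+) dual h3 u = false)).
Proof.
move=> _ hk hf.
case: k f hf hk => [//|m] f hf hk.
have m0 : (0 < m)%N by [].
set r := n./2.
split.
  move=> Hg.
  have key : forall u, exists d : 'I_(2 ^ m), exists e : bool, forall i : 'I_(2 ^ m),
      Sfun m a u i = if i == d then (-1) ^+ e * (2 ^ r)%:R else 0.
    by move=> u; apply: (dir2 hf m0 (Hg u)).
  split.
    move=> h [c hc'] u.
    have [d [e hS]] := key u.
    rewrite (walsh_ext hc') -/(hc m a c) (Wd c hS).
    by rewrite normrM normr_sign mul1r normr_nat natz.
  move=> h0 h1 h2 h3 [c0 e0] [c1 e1] [c2 e2] [c3 e3] hx u.
  have [d [e hS]] := key u.
  have [x0 kx0] : exists x0, kap m a x0 = d.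
    apply: (x0ex (u := u)); rewrite hS eqxx mulf_eq0 signr_eq0 /= pnatr_eq0 expn_eq0 //.
  have dl : forall (h : V n -> bool) c, (forall x, h x = hc m a c x) ->
      dual h u = h x0 (+) a m x0 (+) e.
    move=> h c ehc; rewrite /dual (walsh_ext ehc) (Wd c hS) sign_lt0.
    rewrite ehc /hc gam_kap kx0; congr (_ (+) _).
    by rewrite addbC addbA addbb addFb.
  rewrite (dl h0 c0 e0) (dl h1 c1 e1) (dl h2 c2 e2) (dl h3 c3 e3).
  clear -hx; move: (hx x0) => {hx}.
  move: (h0 x0) (h1 x0) (h2 x0) (h3 x0) (a m x0) e => b0 b1 b2 b3 b4 b5.
  by case: b0; case: b1; case: b2; case: b3; case: b4; case: b5.
move=> [H1 H2] u.
pose G (C : V m) := dual (hc m a (cn C)) u.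
have inAc : forall C : V m, inA m.+1 a (hc m a (cn C)) by move=> C; exists (cn C).
have HW : forall C : V m, walsh (hc m a (cn C)) u = (-1) ^+ (G C) * (2 ^ r)%:R.
  by move=> C; apply: norm_sign; apply: H1.
have Hadd : forall C C' : V m, G (xorv C C') = G C (+) G C' (+) G [ffun _ => false].
  move=> C C'.
  have := H2 _ _ _ _ (inAc (xorv C C')) (inAc C) (inAc C') (inAc [ffun _ => false]).
  move=> /(_ _ u) h.
  have {}h : G (xorv C C') (+) G C (+) G C' (+) G [ffun _ => false] = false.
    apply: h => x; rewrite /hc (beta_xor C C' (fun j => a j x)) (@beta0 m (fun j => a j x)).
    by case: (a m x); case: (\big[addb/false]_(j < m) (cn C j && a j x));
       case: (\big[addb/false]_(j < m) (cn C' j && a j x)).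
  move: h; rewrite /=.
  by case: (G (xorv C C')); case: (G C); case: (G C'); case: (G [ffun _ => false]).
have [i0 [hi0 hoth]] := dir1 HW Hadd.
rewrite (H_expand hf) (bigD1 i0) //= big1 ?addr0.
  rewrite hi0 normrM normrX znorm expr1n mulr1 rmorphM /= intr_sign rmorph_nat.
  by rewrite normrM normr_sign mul1r normr_nat.
by move=> i /hoth ->; rewrite mul0r.
Qed.
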